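(* Every oriented graph without transmitters has at least three weak kings.
   Context: An oriented graph is a digraph with no loops and no pair of symmetric arcs. A transmitter is a vertex of indegree $0$. For vertices $u,v$ write $u(1\text{-}0)v$ if there is an arc from $u$ to $v$, and $u(0\text{-}0)v$ if there is no arc between $u$ and $v$. A vertex $v$ is weakly reachable within two steps from $u$ if $u(1\text{-}0)v$, or $u(0\text{-}0)v$, or for some vertex $w$ one has $u(1\text{-}0)w(1\text{-}0)v$, or $u(1\text{-}0)w(0\text{-}0)v$, or $u(0\text{-}0)w(1\text{-}0)v$. A vertex $u$ of an oriented graph $D$ is a weak king if every other vertex of $D$ is weakly reachable within two steps from $u$. *)

(* Defs.v *)
From mathcomp Require Import all_boot.
Set Implicit Arguments. Unset Strict Implicit. Unset Printing Implicit Defensive.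

Definition oriented_graph (T : finType) (arc : rel T) : Prop :=
  (forall u, ~~ arc u u) /\ (forall u v, arc u v -> ~~ arc v u).

Definition transmitter (T : finType) (arc : rel T) (v : T) : bool :=
  [forall u, ~~ arc u v].

Definition arc10 (T : finType) (arc : rel T) (u v : T) : bool := arc u v.
Definition arc00 (T : finType) (arc : rel T) (u v : T) : bool :=
  ~~ arc u v && ~~ arc v u.

Definition weakly_reachable2 (T : finType) (arc : rel T) (u v : T) : bool :=
  [|| arc10 arc u v, arc00 arc u v
    | [exists w, [|| arc10 arc u w && arc10 arc w v,
                     arc10 arc u w && arc00 arc w v
                   | arc00 arc u w && arc10 arc w v]]].

Definition weak_king (T : finType) (arc : rel T) (u : T) : bool :=
  [forall v, (v != u) ==> weakly_reachable2 arc u v].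

(* Main.v *)
Require Import Defs.
From mathcomp Require Import all_boot.

Section S.
Variables (T : finType) (arc : rel T).
Hypothesis noloop : forall u, ~~ arc u u.
Hypothesis asym : forall u v, arc u v -> ~~ arc v u.

Definition outN (y : T) := [set w | arc y w].

Lemma killer u : ~~ weak_king arc u ->
  exists v, [/\ arc v u, outN u \subset outN v & ~~ arc u v].
Proof.
case/forallPn => v; rewrite negb_imply => /andP [vu].
rewrite /weakly_reachable2 /arc10 /arc00 !negb_or => /and3P [nuv nn /existsPn H].
have avu : arc v u by move: nn; rewrite nuv /= negbK.
exists v; split => //; apply/subsetP => w; rewrite !inE => uw.
have := H w; rewrite uw /= !negb_or => /and3P [h1 h2 _].
by move: h2; rewrite h1 /= negbK.
Qed.

Lemma king_above x : exists y, weak_king arc y && (outN x \subset outN y).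
Proof.
have Px : outN x \subset outN x by [].
case: (@arg_maxnP T x (fun y => outN x \subset outN y) (fun y => #|outN y|) Px)
  => y Py Hmax.
exists y; rewrite Py andbT; apply/negPn/negP => /killer [v [vy sub nyv]].
have Pv : outN x \subset outN v by apply: subset_trans sub.
have : #|outN y| < #|outN v|.
  apply: proper_card; apply/properP; split => //.
  by exists y; rewrite !inE // noloop.
have h : #|outN v| <= #|outN y| := Hmax v Pv.
by rewrite ltnNge h.
Qed.

Lemma king_in m : ~~ transmitter arc m -> exists y, weak_king arc y && arc y m.
Proof.
case/forallPn => x; rewrite negbK => xm.
have [y /andP [ky sub]] := king_above x.
exists y; rewrite ky /=.
by have := subsetP sub m; rewrite !inE; apply.
Qed.
End S.

Theorem theorem6 (T : finType) (arc : rel T) :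
  0 < #|T| ->
  oriented_graph arc ->
  (forall v : T, ~~ transmitter arc v) ->
  3 <= #|[set u : T | weak_king arc u]|.
Proof.
move=> /card_gt0P [x _] [noloop asym] notr.
have [m1 /andP [k1 _]] := @king_above _ _ noloop x.
have [m2 /andP [k2 a21]] := @king_in _ _ noloop _ (notr m1).
have [m3 /andP [k3 a32]] := @king_in _ _ noloop _ (notr m2).
apply/card_gt2P; exists m1, m2, m3; split; first by rewrite !inE k1 k2 k3.
split.
- by apply/eqP => E; move: a21; rewrite E (negbTE (noloop m2)).
- by apply/eqP => E; move: a32; rewrite E (negbTE (noloop m3)).
- apply/eqP => E; move: a32; rewrite E => a12.
  by move: (asym _ _ a12); rewrite a21.
Qed.
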